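(* Over the theory $\mathrm{IKP}-\Delta_0\text{ Bounding}$ (i.e. IKP with the $\Delta_0$ Bounding schema removed), the following three axiom schemes are equivalent: (1) $\Pi$ Persistence; (2) $\Pi$ Uniformity; (3) $\Delta_0$ Uniformity.
   Context: All theories are over intuitionistic first-order logic in the language $\{\in,=\}$. IKP has the axioms: Extensionality, Empty Set, Pairing, Union, Infinity in the form $\exists x\,[0\in x\wedge\forall y\in x\,\exists z\in x\,(z=y\cup\{y\})\wedge\forall y\in x\,(y=0\vee\exists z\in x\; y=z\cup\{z\})]$, the $\in$-Induction schema $\forall x(\forall y\in x\,\phi(y)\to\phi(x))\to\forall x\,\phi(x)$ for all formulas $\phi$, $\Delta_0$ Separation, and $\Delta_0$ Bounding: $\forall x\in A\,\exists y\,\phi(x,y)\to\exists B\,\forall x\in A\,\exists y\in B\,\phi(x,y)$ for $\Delta_0$ $\phi$ (parameters allowed). A $\Delta_0$ formula has only bounded quantifiers. $\Pi$ formulas are the closure of the $\Delta_0$ formulas under $\wedge,\vee$, unbounded $\forall$, and bounded quantifiers $\forall u\in v$, $\exists u\in v$. For a formula $\phi$ and a set $A$, $\phi^{(A)}$ is obtained by bounding every unbounded quantifier of $\phi$ by $A$. $\Pi$ Persistence: $\forall A\,\phi^{(A)}\to\phi$ for every $\Pi$ formula $\phi$. $\Pi$ Uniformity: $\forall B\,\exists x\in A\,\forall y\in B\,\phi(x,y)\to\exists x\in A\,\forall y\,\phi(x,y)$ for every $\Pi$ formula $\phi$ (parameters allowed). $\Delta_0$ Uniformity: the same schema restricted to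 $\Delta_0$ formulas $\phi$. *)

(* Defs.v *)
(* Bounded quantifiers are primitive syntax so that "unbounded quantifier"
   (needed for relativization and for the Δ0 / Π classes) is syntactic. *)
From Stdlib Require Import List.
Import ListNotations.

Inductive form : Type :=
| FMem : nat -> nat -> form          (* FMem i j : x_i ∈ x_j *)
| FEq  : nat -> nat -> form
| FBot : form
| FAnd : form -> form -> form
| FOr  : form -> form -> form
| FImp : form -> form -> form
| FAll : form -> form
| FEx  : form -> form
| FBAll : nat -> form -> form        (* FBAll v φ : ∀ x_0 ∈ v (v is outer index) *)
| FBEx  : nat -> form -> form.

Definition FIff (a b : form) : form := FAnd (FImp a b) (FImp b a).

Definition up (r : nat -> nat) (n : nat) : nat :=
  match n with 0 => 0 | S k => S (r k) end.

Fixpoint rename (r : nat -> nat) (f : form) : form :=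
  match f with
  | FMem i j => FMem (r i) (r j)
  | FEq i j => FEq (r i) (r j)
  | FBot => FBot
  | FAnd a b => FAnd (rename r a) (rename r b)
  | FOr a b => FOr (rename r a) (rename r b)
  | FImp a b => FImp (rename r a) (rename r b)
  | FAll a => FAll (rename (up r) a)
  | FEx a => FEx (rename (up r) a)
  | FBAll v a => FBAll (r v) (rename (up r) a)
  | FBEx v a => FBEx (r v) (rename (up r) a)
  end.

Definition shift (f : form) : form := rename S f.

Definition inst (y : nat) (f : form) : form :=
  rename (fun n => match n with 0 => y | S k => k end) f.

(* Intuitionistic natural deduction over a theory T (a set of formulas;
   free variables of axioms are implicitly universally quantified, so every
   renaming instance of an axiom may be used). Equality is logical. *)
Inductive Prov (T : form -> Prop) : list form -> form -> Prop :=
| P_hyp : forall G f, In f G -> Prov T G f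
| P_ax : forall G f r, T f -> Prov T G (rename r f)
| P_botE : forall G f, Prov T G FBot -> Prov T G f
| P_andI : forall G a b, Prov T G a -> Prov T G b -> Prov T G (FAnd a b)
| P_andE1 : forall G a b, Prov T G (FAnd a b) -> Prov T G a
| P_andE2 : forall G a b, Prov T G (FAnd a b) -> Prov T G b
| P_orI1 : forall G a b, Prov T G a -> Prov T G (FOr a b)
| P_orI2 : forall G a b, Prov T G b -> Prov T G (FOr a b)
| P_orE : forall G a b c, Prov T G (FOr a b) -> Prov T (a :: G) c ->
    Prov T (b :: G) c -> Prov T G c
| P_impI : forall G a b, Prov T (a :: G) b -> Prov T G (FImp a b)
| P_impE : forall G a b, Prov T G (FImp a b) -> Prov T G a -> Prov T G b
| P_allI : forall G a, Prov T (map shift G) a -> Prov T G (FAll a)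
| P_allE : forall G a y, Prov T G (FAll a) -> Prov T G (inst y a)
| P_exI : forall G a y, Prov T G (inst y a) -> Prov T G (FEx a)
| P_exE : forall G a c, Prov T G (FEx a) -> Prov T (a :: map shift G) (shift c) ->
    Prov T G c
| P_ballI : forall G v a, Prov T (FMem 0 (S v) :: map shift G) a -> Prov T G (FBAll v a)
| P_ballE : forall G v a y, Prov T G (FBAll v a) -> Prov T G (FMem y v) ->
    Prov T G (inst y a)
| P_bexI : forall G v a y, Prov T G (FMem y v) -> Prov T G (inst y a) ->
    Prov T G (FBEx v a)
| P_bexE : forall G v a c, Prov T G (FBEx v a) ->
    Prov T (a :: FMem 0 (S v) :: map shift G) (shift c) -> Prov T G c
| P_eqRefl : forall G x, Prov T G (FEq x x)
| P_eqE : forall G x y a, Prov T G (FEq x y) -> Prov T G (inst x a) ->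
    Prov T G (inst y a).

Inductive Delta0 : form -> Prop :=
| D0_mem : forall i j, Delta0 (FMem i j)
| D0_eq : forall i j, Delta0 (FEq i j)
| D0_bot : Delta0 FBot
| D0_and : forall a b, Delta0 a -> Delta0 b -> Delta0 (FAnd a b)
| D0_or : forall a b, Delta0 a -> Delta0 b -> Delta0 (FOr a b)
| D0_imp : forall a b, Delta0 a -> Delta0 b -> Delta0 (FImp a b)
| D0_ball : forall v a, Delta0 a -> Delta0 (FBAll v a)
| D0_bex : forall v a, Delta0 a -> Delta0 (FBEx v a).

Inductive PiF : form -> Prop :=
| Pi_d0 : forall a, Delta0 a -> PiF a
| Pi_and : forall a b, PiF a -> PiF b -> PiF (FAnd a b)
| Pi_or : forall a b, PiF a -> PiF b -> PiF (FOr a b)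
| Pi_all : forall a, PiF a -> PiF (FAll a)
| Pi_ball : forall v a, PiF a -> PiF (FBAll v a)
| Pi_bex : forall v a, PiF a -> PiF (FBEx v a).

Fixpoint rel (A : nat) (f : form) : form :=
  match f with
  | FMem i j => FMem i j
  | FEq i j => FEq i j
  | FBot => FBot
  | FAnd a b => FAnd (rel A a) (rel A b)
  | FOr a b => FOr (rel A a) (rel A b)
  | FImp a b => FImp (rel A a) (rel A b)
  | FAll a => FBAll A (rel (S A) a)
  | FEx a => FBEx A (rel (S A) a)
  | FBAll v a => FBAll v (rel (S A) a)
  | FBEx v a => FBEx v (rel (S A) a)
  end.

(* ∀a∀b [∀x (x∈a ↔ x∈b) → a = b] *)
Definition Ax_ext : form :=
  FAll (FAll (FImp (FAll (FIff (FMem 0 2) (FMem 0 1))) (FEq 1 0))).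

(* ∃x ∀y∈x ⊥ *)
Definition Ax_empty : form := FEx (FBAll 0 FBot).

(* ∀a∀b∃y (a∈y ∧ b∈y) *)
Definition Ax_pair : form := FAll (FAll (FEx (FAnd (FMem 2 0) (FMem 1 0)))).

(* ∀a∃y ∀x∈a ∀z∈x z∈y *)
Definition Ax_union : form := FAll (FEx (FBAll 1 (FBAll 0 (FMem 0 2)))).

Definition isEmpty (v : nat) : form := FBAll v FBot.
(* "x_z = x_y ∪ {x_y}" *)
Definition succOf (z y : nat) : form :=
  FAnd (FBAll z (FOr (FMem 0 (S y)) (FEq 0 (S y))))
       (FAnd (FBAll y (FMem 0 (S z))) (FMem y z)).

(* ∃x [0∈x ∧ ∀y∈x ∃z∈x (z = y∪{y}) ∧ ∀y∈x (y = 0 ∨ ∃z∈x y = z∪{z})] *)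
Definition Ax_inf : form :=
  FEx (FAnd (FBEx 0 (isEmpty 0))
      (FAnd (FBAll 0 (FBEx 1 (succOf 0 1)))
            (FBAll 0 (FOr (isEmpty 0) (FBEx 1 (succOf 1 0)))))).

(* ∈-Induction instance for φ (x_0 = induction variable, others parameters):
   ∀x(∀y∈x φ(y) → φ(x)) → ∀x φ(x) *)
Definition Ax_ind (p : form) : form :=
  FImp (FAll (FImp (FBAll 0 (rename (up S) p)) p)) (FAll p).

(* Δ0 Separation instance (x_0 = separated variable, others parameters):
   ∀a∃y∀x (x∈y ↔ x∈a ∧ φ(x)) *)
Definition Ax_sep (p : form) : form :=
  FAll (FEx (FAll (FIff (FMem 0 1)
     (FAnd (FMem 0 2) (rename (up (fun n => S (S n))) p))))).

Inductive IKP_minus_Bounding : form -> Prop :=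
| T_ext : IKP_minus_Bounding Ax_ext
| T_empty : IKP_minus_Bounding Ax_empty
| T_pair : IKP_minus_Bounding Ax_pair
| T_union : IKP_minus_Bounding Ax_union
| T_inf : IKP_minus_Bounding Ax_inf
| T_ind : forall p, IKP_minus_Bounding (Ax_ind p)
| T_sep : forall p, Delta0 p -> IKP_minus_Bounding (Ax_sep p).

(* Π Persistence: ∀A φ^(A) → φ, φ ∈ Π (free variables of φ are parameters) *)
Inductive PiPersistence : form -> Prop :=
| PP : forall p, PiF p -> PiPersistence (FImp (FAll (rel 0 (shift p))) p).

(* Uniformity instance for φ(x,y) with y = x_0, x = x_1, parameters x_{k+2}
   (= outer x_k), and A = outer variable x_a:
   ∀B ∃x∈A ∀y∈B φ(x,y) → ∃x∈A ∀y φ(x,y) *)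
Definition skipB (n : nat) : nat :=
  match n with 0 => 0 | 1 => 1 | S (S k) => S (S (S k)) end.

Definition Unif (a : nat) (p : form) : form :=
  FImp (FAll (FBEx (S a) (FBAll 1 (rename skipB p))))
       (FBEx a (FAll p)).

Inductive PiUniformity : form -> Prop :=
| PU : forall a p, PiF p -> PiUniformity (Unif a p).

Inductive D0Uniformity : form -> Prop :=
| DU : forall a p, Delta0 p -> D0Uniformity (Unif a p).

Definition Union (T S : form -> Prop) : form -> Prop := fun f => T f \/ S f.

Definition ProvesScheme (T S : form -> Prop) : Prop :=
  forall f, S f -> Prov T [] f.

(* Main.v *)
Require Import Defs.
From Stdlib Require Import List Lia.
Import ListNotations.


Lemma rename_ext r s f : (forall n, r n = s n) -> rename r f = rename s f.
Proof.
  revert r s; induction f; intros r s H; simpl; f_equal; auto;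
  apply IHf || apply IHf1 || apply IHf2; intros [|k]; simpl; f_equal; auto.
Qed.

Lemma rename_comp r s f : rename r (rename s f) = rename (fun n => r (s n)) f.
Proof.
  revert r s; induction f; intros r s; simpl; f_equal; auto;
  rewrite ?IHf; apply rename_ext; intros [|k]; reflexivity.
Qed.

Lemma rename_id f : rename (fun n => n) f = f.
Proof.
  induction f; simpl; f_equal; auto;
  rewrite <- IHf at 2; apply rename_ext; intros [|k]; reflexivity.
Qed.

Lemma rename_inst r y a : rename r (inst y a) = inst (r y) (rename (up r) a).
Proof. unfold inst; rewrite !rename_comp; apply rename_ext; intros [|k]; reflexivity. Qed.

Lemma rename_shift r c : rename (up r) (shift c) = shift (rename r c).
Proof. unfold shift; rewrite !rename_comp; apply rename_ext; intros [|k]; reflexivity. Qed.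

Lemma map_rename_shift r G : map (rename (up r)) (map shift G) = map shift (map (rename r) G).
Proof. rewrite !map_map; apply map_ext; intro; apply rename_shift. Qed.

Lemma Prov_rename T G f : Prov T G f -> forall s, Prov T (map (rename s) G) (rename s f).
Proof.
  induction 1; intro s; simpl in *.
  - apply P_hyp; apply in_map; auto.
  - rewrite rename_comp; apply P_ax; auto.
  - apply P_botE; auto.
  - apply P_andI; auto.
  - eapply P_andE1; eauto.
  - eapply P_andE2; eauto.
  - apply P_orI1; auto.
  - apply P_orI2; auto.
  - eapply P_orE; eauto.
  - apply P_impI; auto.
  - eapply P_impE; eauto.
  - apply P_allI; rewrite <- map_rename_shift; auto.
  - rewrite rename_inst; apply P_allE; auto.
  - apply P_exI with (s y); rewrite <- rename_inst; auto.
  - eapply P_exE; [apply IHProv1|]. rewrite <- map_rename_shift, <- rename_shift.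
    apply (IHProv2 (up s)).
  - apply P_ballI. rewrite <- map_rename_shift. apply (IHProv (up s)).
  - rewrite rename_inst; eapply P_ballE; [apply (IHProv1 s)|apply (IHProv2 s)].
  - eapply P_bexI with (s y); [apply (IHProv1 s)|]. rewrite <- rename_inst; auto.
  - eapply P_bexE; [apply IHProv1|]. rewrite <- map_rename_shift, <- rename_shift.
    apply (IHProv2 (up s)).
  - apply P_eqRefl.
  - rewrite rename_inst. eapply P_eqE; [apply (IHProv1 s)|]. rewrite <- rename_inst; auto.
Qed.

Lemma incl_cons2 {A} (a : A) l l' : incl l l' -> incl (a :: l) (a :: l').
Proof. intros H x [->|Hx]; [left|right]; auto. Qed.

Lemma Prov_weak T G f : Prov T G f -> forall G', incl G G' -> Prov T G' f.
Proof.
  induction 1; intros G' Hi.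
  - apply P_hyp; auto.
  - apply P_ax; auto.
  - apply P_botE; auto.
  - apply P_andI; auto.
  - eapply P_andE1; eauto.
  - eapply P_andE2; eauto.
  - apply P_orI1; auto.
  - apply P_orI2; auto.
  - eapply P_orE; eauto using incl_cons2.
  - apply P_impI; eauto using incl_cons2.
  - eapply P_impE; eauto.
  - apply P_allI; apply IHProv, incl_map; auto.
  - apply P_allE; auto.
  - eapply P_exI; eauto.
  - eapply P_exE; eauto. apply IHProv2, incl_cons2, incl_map; auto.
  - apply P_ballI; apply IHProv, incl_cons2, incl_map; auto.
  - eapply P_ballE; eauto.
  - eapply P_bexI; eauto.
  - eapply P_bexE; eauto. apply IHProv2, incl_cons2, incl_cons2, incl_map; auto.
  - apply P_eqRefl.
  - eapply P_eqE; eauto.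
Qed.


Lemma Prov_conv T G X Y : Prov T G X -> X = Y -> Prov T G Y.
Proof. intros H ->; exact H. Qed.

Lemma cut T G a b : Prov T G a -> Prov T (a :: G) b -> Prov T G b.
Proof. intros H1 H2. eapply P_impE; [apply P_impI; exact H2| exact H1]. Qed.

Lemma inst0_upS a : inst 0 (rename (up S) a) = a.
Proof. unfold inst; rewrite rename_comp; rewrite <- (rename_id a) at 2; apply rename_ext; intros [|k]; reflexivity. Qed.

Lemma inst_shift y a : inst y (shift a) = a.
Proof. unfold inst, shift; rewrite rename_comp; rewrite <- (rename_id a) at 2; apply rename_ext; intros [|k]; reflexivity. Qed.

Lemma shift_prov T G f : Prov T G f -> Prov T (map shift G) (shift f).
Proof. intro H; apply Prov_rename with (s := S) in H; exact H. Qed.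

Lemma shift_prov' T G L f : Prov T G f -> Prov T (L ++ map shift G) (shift f).
Proof. intro H; eapply Prov_weak; [apply shift_prov; exact H|]. intros x Hx; apply in_or_app; auto. Qed.

Lemma hyp_shift T G L f : In f G -> Prov T (L ++ map shift G) (shift f).
Proof. intro H; apply P_hyp; apply in_or_app; right; apply in_map; auto. Qed.

Lemma allE0 T G a : Prov T G (FAll a) -> Prov T (map shift G) a.
Proof. intro H; apply shift_prov in H. rewrite <- (inst0_upS a). apply P_allE; exact H. Qed.

Lemma cut_hyps T L G c : Prov T (L ++ G) c -> (forall f, In f L -> Prov T G f) -> Prov T G c.
Proof.
  revert c; induction L as [|f L IH]; intros c H Hf; simpl in *; auto.
  apply IH; [|intros; apply Hf; auto].
  eapply cut; [|exact H]. eapply Prov_weak; [apply Hf; auto|]. intros x Hx; apply in_or_app; auto.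
Qed.

Lemma rename_rel r A f : rename r (rel A f) = rel (r A) (rename r f).
Proof. revert r A; induction f; intros r A; simpl; f_equal; rewrite ?IHf, ?IHf1, ?IHf2; reflexivity. Qed.

Lemma rel_D0 f : Delta0 f -> forall A, rel A f = f.
Proof. induction 1; intros A; simpl; f_equal; auto. Qed.

Lemma D0_rel f : forall A, Delta0 (rel A f).
Proof. induction f; intros A; simpl; constructor; auto. Qed.

Lemma D0_rename f : Delta0 f -> forall r, Delta0 (rename r f).
Proof. induction 1; intros r; simpl; constructor; auto. Qed.


Lemma ball_shiftE T G v a : Prov T G (FBAll v a) -> Prov T (FMem 0 (S v) :: map shift G) a.
Proof.
  intro H. apply shift_prov' with (L := [FMem 0 (S v)]) in H. simpl in H.
  rewrite <- (inst0_upS a). eapply P_ballE; [exact H|]. apply P_hyp; left; reflexivity.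
Qed.

Lemma bex_shiftI T G v a : Prov T (a :: FMem 0 (S v) :: map shift G) a ->
  Prov T (a :: FMem 0 (S v) :: map shift G) (shift (FBEx v a)).
Proof.
  intro H. simpl. apply P_bexI with 0. apply P_hyp; right; left; reflexivity.
  rewrite inst0_upS. exact H.
Qed.

Lemma Pi_down T q : PiF q -> forall G C, Prov T G q -> Prov T G (rel C q).
Proof.
  induction 1 as [a Ha|a b Ha IHa Hb IHb|a b Ha IHa Hb IHb|a Ha IHa|v a Ha IHa|v a Ha IHa];
    intros G C H; simpl.
  - rewrite rel_D0; auto.
  - apply P_andI; [apply IHa; eapply P_andE1|apply IHb; eapply P_andE2]; eauto.
  - eapply P_orE; [exact H| |].
    + apply P_orI1; apply IHa; apply P_hyp; left; auto.
    + apply P_orI2; apply IHb; apply P_hyp; left; auto.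
  - apply P_ballI. apply IHa. apply allE0 in H.
    eapply Prov_weak; [exact H|]. intros x Hx; right; auto.
  - apply P_ballI. apply IHa. apply ball_shiftE; auto.
  - eapply P_bexE; [exact H|]. simpl. apply P_bexI with 0.
    apply P_hyp; right; left; reflexivity.
    rewrite inst0_upS. apply IHa. apply P_hyp; left; auto.
Qed.

Lemma Pi_mono T p : PiF p -> forall G C D, Prov T G (rel D p) ->
  Prov T G (FBAll C (FMem 0 (S D))) -> Prov T G (rel C p).
Proof.
  induction 1 as [a Ha|a b Ha IHa Hb IHb|a b Ha IHa Hb IHb|a Ha IHa|v a Ha IHa|v a Ha IHa];
    intros G C D H Hs; simpl in *.
  - rewrite rel_D0 in *; auto.
  - apply P_andI; [eapply IHa; [eapply P_andE1|]|eapply IHb; [eapply P_andE2|]]; eauto.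
  - eapply P_orE; [exact H| |].
    + apply P_orI1; eapply IHa; [apply P_hyp; left; auto|].
      eapply Prov_weak; [exact Hs|]; intros x Hx; right; auto.
    + apply P_orI2; eapply IHb; [apply P_hyp; left; auto|].
      eapply Prov_weak; [exact Hs|]; intros x Hx; right; auto.
  - apply P_ballI. pose proof (ball_shiftE _ _ _ _ Hs) as HsD.
    apply IHa with (D := S D).
    + apply shift_prov' with (L := [FMem 0 (S C)]) in H. simpl in H.
      rewrite <- (inst0_upS (rel (S D) a)). eapply P_ballE; [exact H|]. exact HsD.
    + apply shift_prov' with (L := [FMem 0 (S C)]) in Hs. exact Hs.
  - apply P_ballI. apply IHa with (D := S D).
    + apply ball_shiftE; auto.
    + apply shift_prov' with (L := [FMem 0 (S v)]) in Hs. exact Hs.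
  - eapply P_bexE; [exact H|]. simpl. apply P_bexI with 0.
    apply P_hyp; right; left; reflexivity.
    rewrite inst0_upS. apply IHa with (D := S D). apply P_hyp; left; auto.
    apply shift_prov' with (L := [rel (S D) a; FMem 0 (S v)]) in Hs. exact Hs.
Qed.


Lemma PiF_rename p : PiF p -> forall r, PiF (rename r p).
Proof. induction 1; intros r; simpl; try (constructor; auto; fail). apply Pi_d0, D0_rename; auto. Qed.

Lemma bex_mono T G v a b : Prov T G (FBEx v a) -> (forall G', Prov T G' a -> Prov T G' b) ->
  Prov T G (FBEx v b).
Proof.
  intros H Hab. eapply P_bexE; [exact H|]. simpl. apply P_bexI with 0.
  apply P_hyp; right; left; reflexivity.
  rewrite inst0_upS. apply Hab. apply P_hyp; left; auto.
Qed.

Lemma ball_mono T G v a b : Prov T G (FBAll v a) -> (forall G', Prov T G' a -> Prov T G' b) ->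
  Prov T G (FBAll v b).
Proof. intros H Hab. apply P_ballI. apply Hab. apply ball_shiftE; auto. Qed.

Lemma partB T : (forall f, PiPersistence f -> Prov T [] f) ->
  forall f, PiUniformity f -> Prov T [] f.
Proof.
  intros HP f [a p Hp]. unfold Unif. apply P_impI.
  assert (Hpsi : PiF (FBEx a (FAll p))) by (constructor; constructor; auto).
  pose proof (HP _ (PP _ Hpsi)) as H.
  eapply P_impE; [eapply Prov_weak; [exact H| intros x []]|].
  apply P_allI. simpl.
  assert (Hh : Prov T [FAll (FBEx (S a) (FBAll 1 (rename skipB p)))]
                 (FAll (FBEx (S a) (FBAll 1 (rename skipB p))))) by (apply P_hyp; left; auto).
  apply allE0 in Hh.
  eapply bex_mono; [exact Hh|]. intros G' H'.
  eapply ball_mono; [exact H'|]. intros G'' H''.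
  replace (rename (up (up S)) p) with (rename skipB p)
    by (apply rename_ext; intros [|[|k]]; reflexivity).
  apply Pi_down; auto. apply PiF_rename; auto.
Qed.


Lemma axI T (HI : forall f, IKP_minus_Bounding f -> T f) G f :
  IKP_minus_Bounding f -> Prov T G f.
Proof. intro H. rewrite <- (rename_id f). apply P_ax; auto. Qed.

Lemma supU T (HI : forall f, IKP_minus_Bounding f -> T f) G b c :
  Prov T (FBAll (S b) (FBAll 0 (FMem 0 2)) :: map shift G) (shift c) -> Prov T G c.
Proof.
  intro H. eapply P_exE; [|exact H].
  pose proof (axI T HI G _ T_union) as Hu. unfold Ax_union in Hu.
  apply P_allE with (y := b) in Hu. exact Hu.
Qed.

Lemma pairE T (HI : forall f, IKP_minus_Bounding f -> T f) G u v c :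
  Prov T (FAnd (FMem (S u) 0) (FMem (S v) 0) :: map shift G) (shift c) -> Prov T G c.
Proof.
  intro H. eapply P_exE; [|exact H].
  pose proof (axI T HI G _ T_pair) as Hu. unfold Ax_pair in Hu.
  apply P_allE with (y := u) in Hu. apply P_allE with (y := v) in Hu. exact Hu.
Qed.

Lemma emptyE T (HI : forall f, IKP_minus_Bounding f -> T f) G c :
  Prov T (FBAll 0 FBot :: map shift G) (shift c) -> Prov T G c.
Proof.
  intro H. eapply P_exE; [|exact H]. exact (axI T HI G _ T_empty).
Qed.

Lemma map_shift3 G : map shift (map shift (map shift G)) = map (rename (fun n => S (S (S n)))) G.
Proof. rewrite !map_map. apply map_ext; intro; unfold shift; rewrite !rename_comp; reflexivity. Qed.

Lemma shift3 c : shift (shift (shift c)) = rename (fun n => S (S (S n))) c.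
Proof. unfold shift; rewrite !rename_comp; reflexivity. Qed.

Lemma sup2 T (HI : forall f, IKP_minus_Bounding f -> T f) G u v c :
  Prov T (FBAll (S u) (FMem 0 1) :: FMem (S v) 0 :: map shift G) (shift c) -> Prov T G c.
Proof.
  intro H.
  apply (pairE T HI G v v). simpl.
  apply (pairE T HI _ (S u) 0). simpl.
  apply (supU T HI _ 0). simpl.
  apply Prov_rename with (s := up (fun n => S (S n))) in H.
  simpl in H. rewrite map_rename_shift, rename_shift in H.
  eapply Prov_conv with (X := shift (rename (fun n => S (S n)) c));
    [|unfold shift; rewrite !rename_comp; reflexivity].
  eapply cut_hyps with (L := [FBAll (S (S (S u))) (FMem 0 1); FMem (S (S (S v))) 0]).
  - simpl. eapply Prov_weak; [exact H|].
    intros x [Hx|[Hx|Hx]]; [left; auto|right; left; auto|].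
    right; right.
    right; right; right.
    replace (map shift (map shift (map shift G))) with (map shift (map (rename (fun n => S (S n))) G)); auto.
    rewrite !map_map; apply map_ext; intro; unfold shift; rewrite !rename_comp; reflexivity.
  - intros f [<-|[<-|[]]].
    + apply P_ballI.
      assert (Hq : Prov T (FMem 0 (S (S (S (S u)))) :: map shift (FBAll 1 (FBAll 0 (FMem 0 2))
           :: map shift (FAnd (FMem (S (S u)) 0) (FMem 1 0)
           :: map shift (FAnd (FMem (S v) 0) (FMem (S v) 0) :: map shift G))))
           (FMem (S (S (S (S u)))) 2)).
      { simpl. eapply P_andE1. apply P_hyp. right; right; left; reflexivity. }
      assert (Hun : Prov T (FMem 0 (S (S (S (S u)))) :: map shift (FBAll 1 (FBAll 0 (FMem 0 2))
           :: map shift (FAnd (FMem (S (S u)) 0) (FMem 1 0)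
           :: map shift (FAnd (FMem (S v) 0) (FMem (S v) 0) :: map shift G))))
           (FBAll 2 (FBAll 0 (FMem 0 3)))).
      { simpl. apply P_hyp. right; left; reflexivity. }
      pose proof (P_ballE _ _ _ _ _ Hun Hq) as H1. unfold inst in H1; simpl in H1.
      exact (P_ballE _ _ _ _ _ H1 (P_hyp _ _ _ (in_eq _ _))).
    + assert (Hun : Prov T (FBAll 1 (FBAll 0 (FMem 0 2))
           :: map shift (FAnd (FMem (S (S u)) 0) (FMem 1 0)
           :: map shift (FAnd (FMem (S v) 0) (FMem (S v) 0) :: map shift G)))
           (FBAll 1 (FBAll 0 (FMem 0 2)))) by (apply P_hyp; left; reflexivity).
      assert (Hq : Prov T (FBAll 1 (FBAll 0 (FMem 0 2))
           :: map shift (FAnd (FMem (S (S u)) 0) (FMem 1 0)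
           :: map shift (FAnd (FMem (S v) 0) (FMem (S v) 0) :: map shift G))) (FMem 2 1)).
      { simpl. eapply P_andE2. apply P_hyp. right; left; reflexivity. }
      pose proof (P_ballE _ _ _ _ _ Hun Hq) as H1. unfold inst in H1; simpl in H1.
      assert (Hv : Prov T (FBAll 1 (FBAll 0 (FMem 0 2))
           :: map shift (FAnd (FMem (S (S u)) 0) (FMem 1 0)
           :: map shift (FAnd (FMem (S v) 0) (FMem (S v) 0) :: map shift G))) (FMem (S (S (S v))) 2)).
      { simpl. eapply P_andE1. apply P_hyp. right; right; left; reflexivity. }
      exact (P_ballE _ _ _ _ _ H1 Hv).
Qed.

Lemma twoSets T (HI : forall f, IKP_minus_Bounding f -> T f) G c :
  Prov T (FMem 2 0 :: FMem 1 0 :: FBAll 2 FBot :: FMem 2 1 ::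
          map (rename (fun n => S (S (S n)))) G) (rename (fun n => S (S (S n))) c) ->
  Prov T G c.
Proof.
  intro H.
  apply (emptyE T HI G).
  apply (pairE T HI _ 0 0).
  apply (pairE T HI _ 1 0). simpl. rewrite shift3.
  eapply cut_hyps with (L := [FMem 2 0; FMem 1 0; FBAll 2 FBot; FMem 2 1]).
  - eapply Prov_weak; [exact H|]. simpl.
    intros x [Hx|[Hx|[Hx|[Hx|Hx]]]]; try (left; auto; fail);
      try (right; left; auto; fail); try (right; right; left; auto; fail);
      try (right; right; right; left; auto; fail).
    do 7 right. rewrite map_shift3; auto.
  - intros f [<-|[<-|[<-|[<-|[]]]]].
    + eapply P_andE1; apply P_hyp; left; reflexivity.
    + eapply P_andE2; apply P_hyp; left; reflexivity.
    + apply P_hyp; right; right; left; reflexivity.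
    + eapply P_andE1; apply P_hyp; right; left; reflexivity.
Qed.


Ltac feq := repeat (unfold inst, shift; simpl; rewrite ?rename_comp, ?rename_rel);
  repeat (first [reflexivity | apply rename_ext; intros [|[|[|[|[|[|k]]]]]]; reflexivity | f_equal]).

Ltac gn := match goal with |- Prov ?T ?G ?X =>
  let e := fresh "ctx" in let He := fresh "Hctx" in
  remember G as e eqn:He; unfold inst, shift;
  repeat progress (rewrite ?rename_comp, ?rename_rel; cbn [rename rel up]); subst e end.
Ltac nrm H := unfold inst, shift in H; simpl in H; rewrite ?rename_comp, ?rename_rel in H; simpl in H.

Lemma unifE T (HD : forall a p, Delta0 p -> T (Unif a p)) G a p : Delta0 p ->
  Prov T G (FAll (FBEx (S a) (FBAll 1 (rename skipB p)))) -> Prov T G (FBEx a (FAll p)).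
Proof.
  intros Hp H. eapply P_impE; [|exact H].
  pose proof (P_ax T G _ (fun n => n) (HD a p Hp)) as H1. rewrite rename_id in H1. exact H1.
Qed.

Lemma all_andE1 T G a b : Prov T G (FAll (FAnd a b)) -> Prov T G (FAll a).
Proof. intro H; apply P_allI; eapply P_andE1; apply allE0; exact H. Qed.
Lemma all_andE2 T G a b : Prov T G (FAll (FAnd a b)) -> Prov T G (FAll b).
Proof. intro H; apply P_allI; eapply P_andE2; apply allE0; exact H. Qed.

Lemma weak_sh2 T G L f : Prov T G f -> Prov T (L ++ map shift (map shift G)) (shift (shift f)).
Proof. intro H. eapply Prov_weak; [apply shift_prov, shift_prov, H|]. intros x Hx; apply in_or_app; auto. Qed.

Lemma weak_sh3 T G L f : Prov T G f -> Prov T (L ++ map shift (map shift (map shift G))) (shift (shift (shift f))).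
Proof. intro H. eapply Prov_weak; [apply shift_prov, shift_prov, shift_prov, H|]. intros x Hx; apply in_or_app; auto. Qed.

Definition Pers T p := forall s G, Prov T G (FAll (rel 0 (shift (rename s p)))) -> Prov T G (rename s p).

Lemma Pers_rename T p r : Pers T p -> Pers T (rename r p).
Proof. intros H s G; rewrite rename_comp; apply H. Qed.

Lemma Pers_id T p : Pers T p -> forall G, Prov T G (FAll (rel 0 (shift p))) -> Prov T G p.
Proof. intros H G; pose proof (H (fun n => n) G) as H1; rewrite rename_id in H1; exact H1. Qed.

Lemma case_all T (HI : forall f, IKP_minus_Bounding f -> T f)
  (HD : forall a p, Delta0 p -> T (Unif a p)) a (IHa : forall G, Prov T G (FAll (rel 0 (shift a))) -> Prov T G a) (Ha : PiF a) :
  forall G, Prov T G (FAll (rel 0 (shift (FAll a)))) -> Prov T G (FAll a).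
Proof.
  intros G H.
    apply P_allI; apply IHa; apply P_allI.
    apply (sup2 T HI _ 0 1).
    pose proof (weak_sh3 _ _ [FBAll 1 (FMem 0 1); FMem 2 0] _ H) as H3.
    apply P_allE with (y := 0) in H3. nrm H3.
    apply P_ballE with (y := 2) in H3; [|apply P_hyp; right; left; reflexivity].
    gn. eapply Pi_mono with (D := 0); [apply PiF_rename; exact Ha| |].
    + eapply Prov_conv; [exact H3|]. feq.
    + apply P_hyp; left; reflexivity.
Qed.

Lemma case_ball T (HI : forall f, IKP_minus_Bounding f -> T f)
  (HD : forall a p, Delta0 p -> T (Unif a p)) v a (IHa : forall G, Prov T G (FAll (rel 0 (shift a))) -> Prov T G a) (Ha : PiF a) :
  forall G, Prov T G (FAll (rel 0 (shift (FBAll v a)))) -> Prov T G (FBAll v a).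
Proof.
  intros G H.
    apply P_ballI. apply IHa. apply P_allI.
    pose proof (weak_sh2 _ _ [shift (FMem 0 (S v))] _ H) as H2.
    apply P_allE with (y := 0) in H2. nrm H2.
    apply P_ballE with (y := 1) in H2; [|apply P_hyp; left; reflexivity].
    eapply Prov_conv; [exact H2|]. feq.
Qed.

Lemma case_bex T (HI : forall f, IKP_minus_Bounding f -> T f)
  (HD : forall a p, Delta0 p -> T (Unif a p)) v a (IHa : forall G, Prov T G (FAll (rel 0 (shift a))) -> Prov T G a) (Ha : PiF a) :
  forall G, Prov T G (FAll (rel 0 (shift (FBEx v a)))) -> Prov T G (FBEx v a).
Proof.
  intros G H.
    assert (Hu : Prov T G (FBEx v (FAll (rel 0 (shift a))))).
    { apply unifE; [exact HD| apply D0_rel|].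
      apply P_allI. apply (supU T HI _ 0).
      pose proof (weak_sh2 _ _ [FBAll 1 (FBAll 0 (FMem 0 2))] _ H) as H2.
      apply P_allE with (y := 0) in H2. nrm H2.
      eapply P_bexE; [exact H2|]. simpl. apply P_bexI with 0; [apply P_hyp; right; left; reflexivity|].
      unfold inst; simpl. apply P_ballI. gn.
      eapply Pi_mono with (D := 2); [apply PiF_rename; exact Ha| |].
      + eapply Prov_conv; [apply P_hyp; right; left; reflexivity|]. feq.
      + assert (Hs : Prov T (FMem 0 3
     :: map shift
          (rel 1
             (rename
                (fun n : nat =>
                 up (fun n0 : nat => match n0 with
                                     | 0 => 0
                                     | S k => k
                                     end)
                   (up (up S) (up (up S) n)))
                (rename (up S) a))
           :: FMem 0 (S (S (S v)))
              :: shift (FBAll 1 (FBAll 0 (FMem 0 2)))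
                 :: map shift (map shift (map shift G)))) (FBAll 3 (FBAll 0 (FMem 0 4))))
          by (apply P_hyp; right; right; right; left; reflexivity).
        apply P_ballE with (y := 0) in Hs; [|apply P_hyp; left; reflexivity]. exact Hs. }
    eapply bex_mono; [exact Hu|]. intros G' H'; apply IHa; exact H'.
Qed.



Definition add5 (n : nat) := S (S (S (S (S n)))).
Definition phiOr a b := FOr (FAnd (FBAll 1 FBot) (rel 0 (rename add5 a)))
                            (FAnd (FBEx 1 (FEq 0 0)) (rel 0 (rename add5 b))).

Ltac gnH := match goal with |- Prov ?T ?G ?X =>
  let e := fresh "ctx" in let He := fresh "Hctx" in
  remember G as e eqn:He; unfold inst, shift;
  repeat progress (rewrite ?rename_comp, ?rename_rel; cbn [rename rel up skipB add5]); subst e end.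

Ltac nrmH H := match type of H with Prov ?T ?G ?X =>
  let e := fresh "ctx" in let He := fresh "Hctx" in
  remember G as e eqn:He in H; unfold inst, shift in H;
  repeat progress (rewrite ?rename_comp, ?rename_rel in H; cbn [rename rel up skipB add5] in H); subst e end.

Ltac hyp_n n H := match goal with |- Prov ?T ?G _ =>
  assert (H : Prov T G (nth n G FBot)) by (apply P_hyp; apply nth_In; simpl; rewrite ?length_map; lia) end;
  simpl in H.

Lemma case_or T (HI : forall f, IKP_minus_Bounding f -> T f)
  (HD : forall a p, Delta0 p -> T (Unif a p)) a b (Pa : Pers T a) (Pb : Pers T b)
  (Ha : PiF a) (Hb : PiF b) :
  forall G, Prov T G (FAll (rel 0 (shift (FOr a b)))) -> Prov T G (FOr a b).
Proof.
  intros G H. apply (twoSets T HI G).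
  assert (H0 : Prov T (FMem 2 0 :: FMem 1 0 :: FBAll 2 FBot :: FMem 2 1 ::
          map (rename (fun n => S (S (S n)))) G)
          (rename (fun n => S (S (S n))) (FAll (rel 0 (shift (FOr a b)))))).
  { apply Prov_rename with (s := fun n => S (S (S n))) in H.
    eapply Prov_weak; [exact H|]. intros x Hx; do 4 right; exact Hx. }
  set (G0 := FMem 2 0 :: FMem 1 0 :: FBAll 2 FBot :: FMem 2 1 ::
          map (rename (fun n => S (S (S n)))) G) in *.
  assert (Hu : Prov T G0 (FBEx 0 (FAll (phiOr a b)))).
  { apply unifE; [exact HD| repeat constructor; apply D0_rel|].
    apply P_allI. apply (supU T HI _ 0).
    pose proof (weak_sh2 _ _ [FBAll 1 (FBAll 0 (FMem 0 2))] _ H0) as H2.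
    apply P_allE with (y := 0) in H2. nrmH H2.
    eapply P_orE; [exact H2| |].
    - simpl. apply P_bexI with 4; [apply P_hyp; do 2 right; left; reflexivity|].
      unfold inst; simpl. apply P_ballI. unfold phiOr. gnH.
      apply P_orI1; apply P_andI; [apply P_hyp; do 5 right; left; reflexivity|].
      eapply Pi_mono with (D := 1); [apply PiF_rename; exact Ha| |].
      + eapply Prov_conv; [apply P_hyp; right; left; reflexivity|]. feq.
      + eapply Prov_conv; [eapply P_ballE with (v := 2) (a := FBAll 0 (FMem 0 3));
          [apply P_hyp; do 2 right; left; reflexivity | apply P_hyp; left; reflexivity]|reflexivity].
    - simpl. apply P_bexI with 3; [apply P_hyp; do 3 right; left; reflexivity|].
      unfold inst; simpl. apply P_ballI. unfold phiOr. gnH.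
      apply P_orI2; apply P_andI.
      + apply P_bexI with 5; [apply P_hyp; do 6 right; left; reflexivity|]. apply P_eqRefl.
      + eapply Pi_mono with (D := 1); [apply PiF_rename; exact Hb| |].
        * eapply Prov_conv; [apply P_hyp; right; left; reflexivity|]. feq.
        * eapply Prov_conv; [eapply P_ballE with (v := 2) (a := FBAll 0 (FMem 0 3));
          [apply P_hyp; do 2 right; left; reflexivity | apply P_hyp; left; reflexivity]|reflexivity]. }
  eapply P_bexE; [exact Hu|].
  hyp_n 0 Hx. apply P_allE with (y := 0) in Hx. unfold phiOr in Hx. nrmH Hx.
  eapply P_orE; [exact Hx| |].
  - gnH. apply P_orI1. apply Pa. apply P_allI.
    hyp_n 1 Hy. apply P_allE with (y := 0) in Hy. unfold phiOr in Hy. nrmH Hy.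
    eapply P_orE; [exact Hy| |].
    + eapply Prov_conv; [eapply P_andE2; apply P_hyp; left; reflexivity|]. feq.
    + apply P_botE. eapply P_bexE; [eapply P_andE1; apply P_hyp; left; reflexivity|].
      eapply Prov_conv; [eapply P_ballE with (v := 2) (a := FBot);
        [eapply P_andE1; apply P_hyp; do 3 right; left; reflexivity | apply P_hyp; right; left; reflexivity] | reflexivity].
  - gnH. apply P_orI2. apply Pb. apply P_allI.
    hyp_n 1 Hy. apply P_allE with (y := 0) in Hy. unfold phiOr in Hy. nrmH Hy.
    eapply P_orE; [exact Hy| |].
    + apply P_botE. eapply P_bexE; [eapply P_andE1; apply P_hyp; right; left; reflexivity|].
      eapply Prov_conv; [eapply P_ballE with (v := 2) (a := FBot);
        [eapply P_andE1; apply P_hyp; do 2 right; left; reflexivity | apply P_hyp; right; left; reflexivity] | reflexivity].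
    + eapply Prov_conv; [eapply P_andE2; apply P_hyp; left; reflexivity|]. feq.
Qed.


Lemma partA_gen T (HI : forall f, IKP_minus_Bounding f -> T f)
  (HD : forall a p, Delta0 p -> T (Unif a p)) p : PiF p -> Pers T p.
Proof.
  induction 1 as [a Ha|a b Ha IHa Hb IHb|a b Ha IHa Hb IHb|a Ha IHa|v a Ha IHa|v a Ha IHa];
    intros s G H.
  - rewrite rel_D0 in H by (apply D0_rename, D0_rename; auto).
    rewrite <- (inst_shift 0 (rename s a)). apply P_allE; auto.
  - change (rename s (FAnd a b)) with (FAnd (rename s a) (rename s b)) in *.
    apply P_andI; [apply (IHa s); eapply all_andE1|apply (IHb s); eapply all_andE2]; exact H.
  - change (rename s (FOr a b)) with (FOr (rename s a) (rename s b)) in *.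
    apply case_or; auto using Pers_rename, PiF_rename.
  - change (rename s (FAll a)) with (FAll (rename (up s) a)) in *.
    apply case_all; auto using Pers_id, Pers_rename, PiF_rename.
  - change (rename s (FBAll v a)) with (FBAll (s v) (rename (up s) a)) in *.
    apply case_ball; auto using Pers_id, Pers_rename, PiF_rename.
  - change (rename s (FBEx v a)) with (FBEx (s v) (rename (up s) a)) in *.
    apply case_bex; auto using Pers_id, Pers_rename, PiF_rename.
Qed.

Lemma axT T G f : T f -> Prov T G f.
Proof. intro H. rewrite <- (rename_id f). apply P_ax; auto. Qed.

Lemma PP_from T (HI : forall f, IKP_minus_Bounding f -> T f)
  (HD : forall a p, Delta0 p -> T (Unif a p)) : forall f, PiPersistence f -> Prov T [] f.
Proof.
  intros f [p Hp]. apply P_impI. apply (Pers_id T p (partA_gen T HI HD p Hp)).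
  apply P_hyp; left; reflexivity.
Qed.

Theorem mainTheorem1 :
  ProvesScheme (Union IKP_minus_Bounding PiPersistence) PiUniformity /\
  ProvesScheme (Union IKP_minus_Bounding PiPersistence) D0Uniformity /\
  ProvesScheme (Union IKP_minus_Bounding PiUniformity) PiPersistence /\
  ProvesScheme (Union IKP_minus_Bounding PiUniformity) D0Uniformity /\
  ProvesScheme (Union IKP_minus_Bounding D0Uniformity) PiPersistence /\
  ProvesScheme (Union IKP_minus_Bounding D0Uniformity) PiUniformity.
Proof.
  assert (H1 : ProvesScheme (Union IKP_minus_Bounding PiPersistence) PiUniformity).
  { intros f Hf; apply partB; auto. intros g Hg; apply axT; right; auto. }
  assert (H3 : ProvesScheme (Union IKP_minus_Bounding D0Uniformity) PiPersistence).
  { intros f Hf; apply PP_from; auto; [intros g Hg; left; auto| intros a p Hp; right; constructor; auto]. }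
  repeat split.
  - exact H1.
  - intros f [a p Hp]. apply H1. constructor. apply Pi_d0; auto.
  - intros f0 Hf0; apply PP_from; auto; [intros f Hf; left; auto| intros a p Hp; right; constructor; apply Pi_d0; auto].
  - intros f [a p Hp]. apply axT. right. constructor. apply Pi_d0; auto.
  - exact H3.
  - intros f Hf; apply partB; auto.
Qed.
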